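(* Let $\mathsf{Prop}$ be a non-empty finite set of propositions and $\mathsf{L}$ any fragment of $\mathsf{CTL}(\mathsf{Prop})$. For every sample $\mathcal{S}=(\mathcal{P},\mathcal{N})$ of Kripke structures in $\mathcal{K}(\mathsf{Prop})$, if there is an $\mathcal{S}$-separating $\mathsf{L}$-formula, then there is one of size at most $2^n$, where $n:=\sum_{K\in\mathcal{P}\cup\mathcal{N}}|Q_K|$.
   Context: $\mathsf{CTL}(\mathsf{Prop})$-formulas: $\varphi::=p\mid\neg\varphi\mid\varphi\vee\varphi\mid\varphi\wedge\varphi\mid\mathcal{Q}\mathbf{X}\varphi\mid\mathcal{Q}\mathbf{F}\varphi\mid\mathcal{Q}\mathbf{G}\varphi\mid\mathcal{Q}(\varphi\,\mathbf{U}\,\varphi)$ with $p\in\mathsf{Prop}$, $\mathcal{Q}\in\{\exists,\forall\}$. A fragment is given by a subset of these operators; its formulas use only them. $\mathsf{sz}(\varphi)$ is the number of distinct subformulas. $\mathcal{K}(\mathsf{Prop})$: actionless Kripke structures $K=(Q,I,\delta,P,\pi)$ with $Q=Q_K$ finite non-empty, $I\subseteq Q$ non-empty, $\delta:Q\to2^Q$, $P\subseteq\mathsf{Prop}$, $\pi:Q\to2^P$. $\mathsf{Path}(q)$: infinite $\rho\in q\cdot Q^\omega$ with $\rho[i+1]\in\delta(\rho[i])$ for all $i$. Semantics: $q\models p$ iff $p\in\pi(q)$; Boolean connectives as usual; $q\models\mathcal{Q}\mathbf{X}\varphi$ iff $\mathcal{Q}\rho\in\mathsf{Path}(q)$, $\rho[1]\models\varphi$;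 $q\models\mathcal{Q}\mathbf{F}\varphi$ iff $\mathcal{Q}\rho\in\mathsf{Path}(q)$, $\exists i$, $\rho[i]\models\varphi$; $q\models\mathcal{Q}\mathbf{G}\varphi$ iff $\mathcal{Q}\rho\in\mathsf{Path}(q)$, $\forall i$, $\rho[i]\models\varphi$; $q\models\mathcal{Q}(\varphi_1\mathbf{U}\varphi_2)$ iff $\mathcal{Q}\rho\in\mathsf{Path}(q)$, $\exists i$, $\rho[i]\models\varphi_2$ and $\forall j<i$, $\rho[j]\models\varphi_1$. $K\models\varphi$ iff $q\models\varphi$ for all $q\in I$. A sample is a pair of finite sets of structures; a formula is $\mathcal{S}$-separating if satisfied by all structures in $\mathcal{P}$ and by none in $\mathcal{N}$. *)

(* Defs.v *)
From HB Require Import structures.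
From Stdlib Require List.
From mathcomp Require Import all_boot.
Set Implicit Arguments. Unset Strict Implicit. Unset Printing Implicit Defensive.

Section CTL.
Variable AP : finType.

Inductive form :=
| FAtom of AP
| FNot of form
| FOr of form & form
| FAnd of form & form
| FEX of form | FAX of form
| FEF of form | FAF of form
| FEG of form | FAG of form
| FEU of form & form | FAU of form & form.

(* encoding into generic trees, to get decidable equality *)
Fixpoint enc (f : form) : GenTree.tree AP :=
  match f with
  | FAtom p => GenTree.Leaf p
  | FNot a => GenTree.Node 0 [:: enc a]
  | FOr a b => GenTree.Node 1 [:: enc a; enc b]
  | FAnd a b => GenTree.Node 2 [:: enc a; enc b]
  | FEX a => GenTree.Node 3 [:: enc a]
  | FAX a => GenTree.Node 4 [:: enc a]
  | FEF a => GenTree.Node 5 [:: enc a]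
  | FAF a => GenTree.Node 6 [:: enc a]
  | FEG a => GenTree.Node 7 [:: enc a]
  | FAG a => GenTree.Node 8 [:: enc a]
  | FEU a b => GenTree.Node 9 [:: enc a; enc b]
  | FAU a b => GenTree.Node 10 [:: enc a; enc b]
  end.

Fixpoint dec (t : GenTree.tree AP) : option form :=
  match t with
  | GenTree.Leaf p => Some (FAtom p)
  | GenTree.Node n ts =>
    let ds := map dec ts in
    match n, ds with
    | 0, [:: Some a] => Some (FNot a)
    | 1, [:: Some a; Some b] => Some (FOr a b)
    | 2, [:: Some a; Some b] => Some (FAnd a b)
    | 3, [:: Some a] => Some (FEX a)
    | 4, [:: Some a] => Some (FAX a)
    | 5, [:: Some a] => Some (FEF a)
    | 6, [:: Some a] => Some (FAF a)
    | 7, [:: Some a] => Some (FEG a)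
    | 8, [:: Some a] => Some (FAG a)
    | 9, [:: Some a; Some b] => Some (FEU a b)
    | 10, [:: Some a; Some b] => Some (FAU a b)
    | _, _ => None
    end
  end.

Lemma encK : pcancel enc dec.
Proof. by elim=> //= a -> // b ->. Qed.

End CTL.

HB.instance Definition _ (AP : finType) := Equality.copy (form AP) (pcan_type (@encK AP)).

Inductive op := ONot | OOr | OAnd | OEX | OAX | OEF | OAF | OEG | OAG | OEU | OAU.

(* A fragment L is given by a subset of the operators; phi is an L-formula iff
   it uses only operators from L (atomic propositions are always allowed). *)
Fixpoint in_fragment (AP : finType) (L : op -> bool) (f : form AP) : bool :=
  match f with
  | FAtom _ => true
  | FNot a => L ONot && in_fragment L a
  | FOr a b => [&& L OOr, in_fragment L a & in_fragment L b]
  | FAnd a b => [&& L OAnd, in_fragment L a & in_fragment L b]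
  | FEX a => L OEX && in_fragment L a
  | FAX a => L OAX && in_fragment L a
  | FEF a => L OEF && in_fragment L a
  | FAF a => L OAF && in_fragment L a
  | FEG a => L OEG && in_fragment L a
  | FAG a => L OAG && in_fragment L a
  | FEU a b => [&& L OEU, in_fragment L a & in_fragment L b]
  | FAU a b => [&& L OAU, in_fragment L a & in_fragment L b]
  end.

Fixpoint subforms (AP : finType) (f : form AP) : seq (form AP) :=
  f :: match f with
       | FAtom _ => [::]
       | FNot a | FEX a | FAX a | FEF a | FAF a | FEG a | FAG a => subforms a
       | FOr a b | FAnd a b | FEU a b | FAU a b => subforms a ++ subforms b
       end.

Definition sz (AP : finType) (f : form AP) : nat := size (undup (subforms f)).

Record kripke (AP : finType) := Kripke {
  kQ : finType;
  kI : {set kQ};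
  kdelta : kQ -> {set kQ};
  kP : {set AP};
  klab : kQ -> {set AP};
  kI_nonempty : kI != set0;
  klab_sub : forall q, klab q \subset kP
}.

Definition is_path (AP : finType) (K : kripke AP) (q : kQ K) (rho : nat -> kQ K) : Prop :=
  rho 0 = q /\ forall i, rho i.+1 \in kdelta (rho i).

Fixpoint sat (AP : finType) (K : kripke AP) (q : kQ K) (f : form AP) : Prop :=
  match f with
  | FAtom p => p \in klab q
  | FNot a => ~ sat q a
  | FOr a b => sat q a \/ sat q b
  | FAnd a b => sat q a /\ sat q b
  | FEX a => exists rho, is_path q rho /\ sat (rho 1) a
  | FAX a => forall rho, is_path q rho -> sat (rho 1) a
  | FEF a => exists rho, is_path q rho /\ exists i, sat (rho i) a
  | FAF a => forall rho, is_path q rho -> exists i, sat (rho i) a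
  | FEG a => exists rho, is_path q rho /\ forall i, sat (rho i) a
  | FAG a => forall rho, is_path q rho -> forall i, sat (rho i) a
  | FEU a b => exists rho, is_path q rho /\
      exists i, sat (rho i) b /\ forall j, j < i -> sat (rho j) a
  | FAU a b => forall rho, is_path q rho ->
      exists i, sat (rho i) b /\ forall j, j < i -> sat (rho j) a
  end.

Definition models (AP : finType) (K : kripke AP) (f : form AP) : Prop :=
  forall q, q \in kI K -> sat q f.

Definition separating (AP : finType) (Pos Neg : seq (kripke AP)) (f : form AP) : Prop :=
  (forall K, List.In K Pos -> models K f) /\ (forall K, List.In K Neg -> ~ models K f).

Definition sample_size (AP : finType) (Pos Neg : seq (kripke AP)) : nat :=
  \sum_(K <- Pos ++ Neg) #|kQ K|.

(* Main.v *)
Require Import Defs.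
From mathcomp Require Import all_boot.
From Stdlib Require Import ClassicalEpsilon Setoid Morphisms.
Set Implicit Arguments. Unset Strict Implicit. Unset Printing Implicit Defensive.

Section Aux.
Variable AP : finType.
Implicit Types f g r x y z : form AP.

Definition children f : seq (form AP) :=
  match f with
  | FAtom _ => [::]
  | FNot a | FEX a | FAX a | FEF a | FAF a | FEG a | FAG a => [:: a]
  | FOr a b | FAnd a b | FEU a b | FAU a b => [:: a; b]
  end.

Definition rebuild f (h : form AP -> form AP) : form AP :=
  match f with
  | FAtom p => FAtom p
  | FNot a => FNot (h a) | FEX a => FEX (h a) | FAX a => FAX (h a)
  | FEF a => FEF (h a) | FAF a => FAF (h a) | FEG a => FEG (h a) | FAG a => FAG (h a)
  | FOr a b => FOr (h a) (h b) | FAnd a b => FAnd (h a) (h b)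
  | FEU a b => FEU (h a) (h b) | FAU a b => FAU (h a) (h b)
  end.

Fixpoint ht f : nat :=
  match f with
  | FAtom _ => 0
  | FNot a | FEX a | FAX a | FEF a | FAF a | FEG a | FAG a => (ht a).+1
  | FOr a b | FAnd a b | FEU a b | FAU a b => (maxn (ht a) (ht b)).+1
  end.

Lemma ht_children f c : c \in children f -> ht c < ht f.
Proof.
case: f => /=; intros; rewrite ?inE in H *;
 repeat match goal with
 | H : is_true (_ || _) |- _ => case/orP: H => /eqP ->
 | H : is_true (_ == _) |- _ => move/eqP: H => ->
 end; rewrite ?ltnS ?leq_maxl ?leq_maxr ?leqnn //.
Qed.

Lemma subforms_self f : f \in subforms f.
Proof. by case: f => *; rewrite inE eqxx. Qed.

Lemma children_sub f c : c \in children f -> c \in subforms f.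
Proof.
case: f => /=; intros; rewrite ?inE in H *;
 repeat match goal with
 | H : is_true (_ || _) |- _ => case/orP: H => /eqP ->
 | H : is_true (_ == _) |- _ => move/eqP: H => ->
 end; rewrite ?mem_cat ?subforms_self ?orbT //.
Qed.

Lemma subforms_trans x y z : x \in subforms y -> y \in subforms z -> x \in subforms z.
Proof.
move=> Hx; elim: z => /= [p|a IHa|a IHa b IHb|a IHa b IHb|a IHa|a IHa|a IHa|a IHa|a IHa|a IHa|a IHa b IHb|a IHa b IHb] H; rewrite in_cons in H; case/orP: H => [/eqP Hy|Hy];
  try (by rewrite Hy in Hx); try (by rewrite in_nil in Hy);
  rewrite inE ?mem_cat; apply/orP; right; rewrite ?mem_cat in Hy;
  try (by auto);
  try (case/orP: Hy => Hy; apply/orP; [left|right]; auto).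
Qed.

Lemma ht_sub x y : x \in subforms y -> ht x <= ht y.
Proof.
elim: y => /= [p|a IHa|a IHa b IHb|a IHa b IHb|a IHa|a IHa|a IHa|a IHa|a IHa|a IHa|a IHa b IHb|a IHa b IHb] H; rewrite in_cons in H; case/orP: H => [/eqP ->//|Hy]; try (by rewrite in_nil in Hy);
  rewrite ?mem_cat in Hy;
  try (by apply: leqW; auto);
  try (by case/orP: Hy => Hy; apply: leqW;
    [apply: leq_trans (leq_maxl _ _) | apply: leq_trans (leq_maxr _ _)]; auto).
Qed.

Lemma subforms_rebuild r h x : x \in subforms (rebuild r h) ->
  x = rebuild r h \/ exists2 c, c \in children r & x \in subforms (h c).
Proof.
case: r => /=; intros; rewrite in_cons ?mem_cat in H; case/orP: H => [/eqP->|]; auto; try (by rewrite in_nil);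
 try (by move=> H; right; exists f; rewrite ?inE ?eqxx);
 try (by case/orP => H; right; [exists f | exists f0]; rewrite ?inE ?eqxx ?orbT).
Qed.

Lemma eq_rebuild r h h' : (forall c, c \in children r -> h c = h' c) ->
  rebuild r h = rebuild r h'.
Proof.
case: r => /=; intros; rewrite ?H ?inE ?eqxx ?orbT //.
Qed.

Lemma frag_rebuild L r h : in_fragment L r ->
  (forall c, c \in children r -> in_fragment L (h c)) -> in_fragment L (rebuild r h).
Proof.
case: r => //=; intros;
 repeat match goal with H : is_true (_ && _) |- _ => case/andP: H => ? ? end;
 rewrite ?H0 ?inE ?eqxx ?orbT ?andbT; try (apply/andP; split); auto.
Qed.

Lemma frag_children L r c : in_fragment L r -> c \in children r -> in_fragment L c.
Proof.
case: r => //=; intros; rewrite ?inE in H0;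
 repeat match goal with H : is_true (_ && _) |- _ => case/andP: H => ? ? end;
 repeat match goal with
 | H : is_true (_ || _) |- _ => case/orP: H => /eqP ->
 | H : is_true (_ == _) |- _ => move/eqP: H => ->
 end; auto.
Qed.

Lemma sat_rebuild (K : kripke AP) r h :
  (forall c, c \in children r -> forall q : kQ K, sat q (h c) <-> sat q c) ->
  forall q : kQ K, sat q (rebuild r h) <-> sat q r.
Proof.
case: r => /=; intros;
 try (have Ha := H _ (mem_head _ _));
 try (have Hb := H f0 ltac:(by rewrite !inE eqxx orbT));
 try (setoid_rewrite Ha); try (setoid_rewrite Hb); reflexivity.
Qed.

Lemma frag_sub L x y : in_fragment L y -> x \in subforms y -> in_fragment L x.
Proof.
elim: y => /= [p|a IHa|a IHa b IHb|a IHa b IHb|a IHa|a IHa|a IHa|a IHa|a IHa|a IHa|a IHa b IHb|a IHa b IHb] Ly H; rewrite in_cons in H; case/orP: H => [/eqP ->//|Hy];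
  try (by rewrite in_nil in Hy); rewrite ?mem_cat in Hy;
  repeat match goal with H : is_true (_ && _) |- _ => case/andP: H => ? ? end;
  try (by auto);
  try (by case/orP: Hy => Hy; auto).
Qed.

End Aux.
Section PickMin.
Variables (T : eqType) (p : pred T) (m : T -> nat).
Fixpoint pickmin (s : seq T) : option T :=
  match s with
  | [::] => None
  | x :: s' => match pickmin s' with
               | None => if p x then Some x else None
               | Some y => if p x && (m x <= m y) then Some x else Some y
               end
  end.
Lemma pickmin_spec s :
  match pickmin s with
  | None => forall z, z \in s -> ~~ p z
  | Some y => [/\ y \in s, p y & forall z, z \in s -> p z -> m y <= m z]
  end.
Proof.
elim: s => //= x s IH.
case E: (pickmin s) => [y|]; rewrite E in IH.
- case: IH => ys py Hy.
  case: ifP => [/andP [px le]|H].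
  + split; rewrite ?inE ?eqxx // => z; rewrite inE => /orP [/eqP ->|zs] pz //.
    exact: leq_trans le (Hy z zs pz).
  + split; rewrite ?inE ?ys ?orbT // => z; rewrite inE => /orP [/eqP ->|zs] pz.
    * by rewrite pz /= in H; apply: ltnW; rewrite ltnNge H.
    * exact: Hy.
- case: ifP => px.
  + split; rewrite ?inE ?eqxx // => z; rewrite inE => /orP [/eqP ->|zs] pz //.
    by rewrite (negbTE (IH z zs)) in pz.
  + move=> z; rewrite inE => /orP [/eqP ->|zs]; first by rewrite px.
    exact: IH.
Qed.
Lemma pickminP s z : z \in s -> p z ->
  exists y, [/\ pickmin s = Some y, y \in s, p y & m y <= m z].
Proof.
move=> zs pz; have := pickmin_spec s; case: (pickmin s) => [y [ys py Hy]|H].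
- by exists y; split => //; apply: Hy.
- by move: (H z zs); rewrite pz.
Qed.
End PickMin.
Lemma nth_List (T : Type) (l : seq T) n d d' : n < size l -> nth d l n = List.nth n l d'.
Proof. by elim: l n => [|a l IH] [|n] //= Hn; apply: IH. Qed.

Definition asb (P : Prop) : bool := if excluded_middle_informative P then true else false.
Lemma asbP (P : Prop) : asb P <-> P.
Proof. by rewrite /asb; case: excluded_middle_informative. Qed.
Lemma asb_eq (P Q : Prop) : (P <-> Q) -> asb P = asb Q.
Proof.
rewrite /asb => H; do 2 case: excluded_middle_informative => ?; try reflexivity; exfalso; tauto.
Qed.

Section Main.
Variable AP : finType.
Lemma K0_ne : [set: unit] != set0.
Proof. by apply/set0Pn; exists tt; rewrite inE. Qed.
Lemma K0_sub (q : unit) : (set0 : {set AP}) \subset set0.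
Proof. exact: sub0set. Qed.
Definition K0 : kripke AP := @Kripke AP unit [set: unit] (fun _ => [set: unit]) set0 (fun _ => set0) K0_ne K0_sub.
Variable s : seq (kripke AP).
Definition St := {i : 'I_(size s) & kQ (nth K0 s i)}.
Definition sem (f : form AP) : {ffun St -> bool} := [ffun x : St => asb (sat (tagged x) f)].

Lemma semP f g : sem f = sem g <->
  (forall (i : 'I_(size s)) (q : kQ (nth K0 s i)), sat q f <-> sat q g).
Proof.
split.
- move=> E i q; have := congr1 (fun F : {ffun St -> bool} => F (Tagged (fun i : 'I_(size s) => kQ (nth K0 s i)) q)) E.
  rewrite /sem !ffunE /= => E'; split => H.
  + by apply/asbP; rewrite -E'; apply/asbP.
  + by apply/asbP; rewrite E'; apply/asbP.
- move=> H; apply/ffunP => x; rewrite !ffunE; apply: asb_eq; case: x => i q; exact: H.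
Qed.

Lemma In_tnth K : List.In K s -> exists i : 'I_(size s), nth K0 s i = K.
Proof.
move=> HK; have [n [Hn Hnth]] := List.In_nth s K K HK.
have Hn' : n < size s by apply/ltP.
exists (Ordinal Hn') => /=.
by rewrite -Hnth; apply: nth_List.
Qed.

Lemma card_St : #|{: St}| = \sum_(K <- s) #|kQ K|.
Proof.
rewrite card_tagged sumnE big_map big_enum /= (big_nth K0) big_mkord.
by apply: eq_bigr.
Qed.

Variable phi : form AP.
Let subs := subforms phi.
Definition R (c : {ffun St -> bool}) : form AP :=
  odflt phi (pickmin (fun g => sem g == c) (@ht AP) subs).

Lemma RP f : f \in subs -> [/\ R (sem f) \in subs, sem (R (sem f)) = sem f & ht (R (sem f)) <= ht f].
Proof.
move=> fs; have [y [E ys /eqP py le]] := pickminP (p := fun g => sem g == sem f) (@ht AP) fs (eqxx _).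
by rewrite /R E.
Qed.

Fixpoint H (k : nat) (c : {ffun St -> bool}) : form AP :=
  match k with
  | 0 => R c
  | k'.+1 => rebuild (R c) (fun ch => H k' (sem ch))
  end.

Lemma child_subs f c : f \in subs -> c \in children f -> c \in subs.
Proof. move=> fs cc; exact: subforms_trans (children_sub cc) fs. Qed.

Lemma H_sem L : in_fragment L phi -> forall k f, f \in subs -> ht f < k ->
  sem (H k (sem f)) = sem f /\ in_fragment L (H k (sem f)).
Proof.
move=> Lphi; have subL g : g \in subs -> in_fragment L g by move=> gs; exact: frag_sub Lphi gs.
elim=> [//|k IH] f fs hf /=.
have [rs rsem rht] := RP fs.
have IHc c : c \in children (R (sem f)) -> sem (H k (sem c)) = sem c /\ in_fragment L (H k (sem c)).
  move=> cc; apply: IH; first exact: child_subs cc.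
  by apply: leq_trans (ht_children cc) _; apply: leq_trans rht _.
split.
- apply: etrans _ rsem; apply/semP => i q /=; apply: sat_rebuild => c cc q'.
  by case: (IHc c cc) => /semP E _; apply: E.
- apply: frag_rebuild; first exact: subL.
  by move=> c cc; case: (IHc c cc).
Qed.

Lemma H_indep k k' f : f \in subs -> ht f < k -> ht f < k' -> H k (sem f) = H k' (sem f).
Proof.
elim: k k' f => [|k IH] [|k'] f fs //= hk hk'.
have [rs rsem rht] := RP fs.
apply: eq_rebuild => c cc; apply: IH; first exact: child_subs cc.
- by apply: leq_trans (ht_children cc) _; apply: leq_trans rht _.
- by apply: leq_trans (ht_children cc) _; apply: leq_trans rht _.
Qed.

Let N := (ht phi).+1.

Lemma H_subs k f : f \in subs -> ht f < k -> forall x, x \in subforms (H k (sem f)) ->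
  exists2 g, g \in subs & x = H N (sem g).
Proof.
elim: k f => [|k IH] f fs // hk x.
have [rs rsem rht] := RP fs.
case/subforms_rebuild => [->|[c cc xc]].
- exists f => //; change (H k.+1 (sem f) = H N (sem f)).
  by apply: H_indep => //; rewrite /N ltnS; apply: ht_sub.
- apply: (IH c) xc; first exact: child_subs cc.
  by apply: leq_trans (ht_children cc) _; apply: leq_trans rht _.
Qed.

End Main.

Theorem corollary4 (AP : finType) (hAP : 0 < #|AP|) (L : op -> bool)
    (Pos Neg : seq (kripke AP)) :
  (exists f : form AP, in_fragment L f /\ separating Pos Neg f) ->
  exists f : form AP, [/\ in_fragment L f, separating Pos Neg f &
                          sz f <= 2 ^ sample_size Pos Neg].
Proof.
move=> [phi [Lphi [Hpos Hneg]]].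
pose s := Pos ++ Neg.
pose N := (ht phi).+1.
pose f0 := H phi N (sem s phi).
have phis : phi \in subforms phi := subforms_self phi.
have [Esem Lf0] := H_sem s Lphi phis (ltnSn _).
have equiv K : List.In K s -> forall q : kQ K, sat q f0 <-> sat q phi.
  move=> /In_tnth [i Ei]; subst K => q; move/semP: Esem; apply.
exists f0; split => //.
- split.
  + move=> K HK q qI; apply/(equiv K); first by apply: List.in_or_app; left.
    exact: Hpos.
  + move=> K HK Hm; apply: (Hneg K HK) => q qI.
    apply/(equiv K); first by apply: List.in_or_app; right.
    exact: Hm.
- rewrite /sz /sample_size -/s -card_St -[2]card_bool -card_ffun cardE.
  rewrite -(size_map (fun c => @H AP s phi N c)).
  apply: uniq_leq_size; first exact: undup_uniq.
  move=> x; rewrite mem_undup => /(@H_subs AP s phi N phi phis (ltnSn _)) [g gs ->].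
  by apply: map_f; rewrite mem_enum.
Qed.
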